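(* Let $G$ be a word-representable graph and $n\ge 2$. Then $l(G \circ K_n) \le n\,l(G) + (n-1)\kappa_G$, where $\kappa_G$ is the size of a maximum clique of $G$.
   Context: All graphs are simple and undirected; $K_n$ is the complete graph on $n$ vertices, rooted at one of its vertices. Letters $x,y$ alternate in a word $w$ if deleting all other letters from $w$ yields $xyxy\ldots$ or $yxyx\ldots$ (of either parity). A word $w$ over $V(G)$ represents $G$ if every vertex occurs in $w$ and for all distinct $x,y$, $xy\in E(G)$ iff $x,y$ alternate in $w$; $G$ is word-representable if such a word exists, and $l(G)$ is the minimum length of a word representing $G$. For a graph $G$ and a rooted graph $H$, the rooted product $G\circ H$ is obtained by taking $|V(G)|$ disjoint copies of $H$, one for each vertex $v$ of $G$, and identifying each vertex $v$ of $G$ with the root of its copy of $H$. *)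

(* Defs.v *)
From mathcomp Require Import all_boot.
Set Implicit Arguments. Unset Strict Implicit. Unset Printing Implicit Defensive.

Definition simple_graph (T : finType) (e : rel T) : Prop :=
  symmetric e /\ irreflexive e.

(* x and y alternate in w: deleting all letters other than x, y from w yields
   xyxy... or yxyx... (any parity), i.e. no two consecutive letters of the
   restricted word are equal. *)
Definition alternate (T : eqType) (w : seq T) (x y : T) : bool :=
  sorted (fun a b => a != b) (filter (fun z => (z == x) || (z == y)) w).

Definition represents (T : finType) (e : rel T) (w : seq T) : Prop :=
  (forall v : T, v \in w) /\
  (forall x y : T, x != y -> (e x y <-> alternate w x y)).

Definition word_representable (T : finType) (e : rel T) : Prop :=
  exists w, represents e w.

Definition is_min_rep_length (T : finType) (e : rel T) (k : nat) : Prop :=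
  (exists w, represents e w /\ size w = k) /\
  (forall w, represents e w -> k <= size w).

Definition is_clique (T : finType) (e : rel T) (S : {set T}) : bool :=
  [forall x in S, forall y in S, (x != y) ==> e x y].

Definition clique_number (T : finType) (e : rel T) : nat :=
  \max_(S : {set T} | is_clique e S) #|S|.

(* Rooted product G o K_n: vertices (v, i) with i : 'I_n; (v, 0) is the root
   of the copy of K_n attached at v, identified with v. *)
Definition rooted_prod_K (T : finType) (e : rel T) (n : nat) : rel (T * 'I_n) :=
  fun p q =>
    if (p.2 == 0 :> nat) && (q.2 == 0 :> nat) then e p.1 q.1
    else (p.1 == q.1) && (p.2 != q.2).
Arguments rooted_prod_K {T} e n _ _.

(* Main.v *)
Require Import Defs.
From mathcomp Require Import all_boot zify.
From Stdlib Require Import Classical.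
Set Implicit Arguments. Unset Strict Implicit. Unset Printing Implicit Defensive.

Fixpoint bld (T : eqType) (A : Type) (h : T -> nat -> seq A) (pre rest : seq T)
  : seq A :=
  match rest with
  | [::] => [::]
  | x :: r => h x (count_mem x pre) ++ bld h (x :: pre) r
  end.

Lemma bld_filter (T A : eqType) (h : T -> nat -> seq A) (P : pred A) (v : T) :
  (forall x j, x != v -> filter P (h x j) = [::]) ->
  forall rest pre, filter P (bld h pre rest) =
    filter P (flatten [seq h v j | j <- iota (count_mem v pre) (count_mem v rest)]).
Proof.
move=> Hoff; elim=> [|x r IH] pre /=; first by [].
rewrite filter_cat IH /=. idtac.
case: (eqVneq x v) => [->|Hxv].
  by rewrite !add1n /= filter_cat.
by rewrite Hoff // (negbTE Hxv) /=.
Qed.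

Lemma bld_filter_map (T A : eqType) (h : T -> nat -> seq A) (P : pred A) (f : T -> seq A) :
  (forall x j, filter P (h x j) = f x) ->
  forall rest pre, filter P (bld h pre rest) = flatten (map f rest).
Proof.
move=> Hf; elim=> [|x r IH] pre //=.
by rewrite filter_cat Hf IH.
Qed.

Lemma bld_first (T A : eqType) (h : T -> nat -> seq A) (P : pred A) (v : T) :
  forall rest pre, v \in rest -> count_mem v pre = 0 ->
  exists B C, filter P (bld h pre rest) = B ++ filter P (h v 0) ++ C.
Proof.
elim=> [|x r IH] pre //=; rewrite inE => Hin Hc.
case: (eqVneq v x) => [<-|Hvx].
  by exists [::], (filter P (bld h (v :: pre) r)); rewrite Hc filter_cat.
have Hc' : count_mem v (x :: pre) = 0 by rewrite /= eq_sym (negbTE Hvx).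
have Hr : v \in r by move: Hin; rewrite (negbTE Hvx).
rewrite filter_cat; have [B [C ->]] := IH (x :: pre) Hr Hc'.
by exists (filter P (h x (count_mem x pre)) ++ B), C; rewrite catA.
Qed.

Lemma sorted_dup (A : eqType) (B C : seq A) (x : A) :
  sorted (fun a b => a != b) (B ++ x :: x :: C) = false.
Proof.
case: B => [|a B] /=; first by rewrite eqxx.
by rewrite cat_path /= eqxx /= !andbF.
Qed.

Lemma alt2 (A : eqType) (a b : A) k : a != b ->
  path (fun a b => a != b) b (flatten (nseq k [:: a; b])).
Proof.
move=> Hab; elim: k => [|k IH] //=.
by rewrite /= IH (eq_sym b a) Hab.
Qed.

Lemma last_alt2 (A : eqType) (a b : A) k :
  last b (flatten (nseq k [:: a; b])) = b.
Proof. by elim: k => [|k IH] //=. Qed.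

Lemma filter_nseq (A : eqType) (P : pred A) k s :
  filter P (flatten (nseq k s)) = flatten (nseq k (filter P s)).
Proof. by elim: k => [|k IH] //=; rewrite filter_cat IH. Qed.

Lemma size_nseqf (A : Type) k (s : seq A) :
  size (flatten (nseq k s)) = k * size s.
Proof. by elim: k => [|k IH] //=; rewrite size_cat IH mulSn. Qed.

Lemma filter_nil_all (A : eqType) (P : pred A) s :
  (forall z, z \in s -> P z = false) -> filter P s = [::].
Proof.
elim: s => [|a s IH] H //=.
rewrite H ?mem_head // IH // => z Hz; apply: H; rewrite inE Hz orbT //.
Qed.

Lemma sum_count_size (T : finType) (s : seq T) :
  \sum_(v : T) count_mem v s = size s.
Proof.
elim: s => [|x s IH] /=; first by rewrite big1.
rewrite big_split /= IH addnC -addn1; congr (_ + _).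
rewrite -big_mkcond /=.
by rewrite (big_pred1 x) // => y; rewrite /= eq_sym.
Qed.

Definition Bk (T : finType) (n : nat) (v : T) : seq (T * 'I_n) :=
  [seq (v, i) | i <- enum 'I_n & val i != 0].

Definition piece (T : finType) (n : nat) (r0 : 'I_n) (v : T) (j m : nat) :=
  if j == 0 then Bk n v ++ (v, r0) :: Bk n v
  else if j.+1 == m then [:: (v, r0)] else (v, r0) :: Bk n v.

Lemma Bk_uniq (T : finType) n (v : T) : uniq (Bk n v).
Proof.
rewrite map_inj_uniq; first by apply: filter_uniq; apply: enum_uniq.
by move=> i j [].
Qed.

Lemma mem_Bk (T : finType) n (v : T) (z : T * 'I_n) :
  (z \in Bk n v) = (z.1 == v) && (val z.2 != 0).
Proof.
case: z => a i /=; apply/mapP/andP => [[k]|[/eqP -> Hi]].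
  by rewrite mem_filter => /andP [Hk _] [-> ->].
by exists i => //; rewrite mem_filter Hi mem_enum.
Qed.

Lemma size_Bk (T : finType) n (v : T) : 0 < n -> size (Bk n v) = n.-1.
Proof.
case: n => [|n] // _.
rewrite size_map size_filter -(count_map val (fun k => k != 0)) val_enum_ord.
rewrite /= -[n in RHS](size_iota 1 n) -count_predT.
by apply: eq_in_count => k; rewrite mem_iota => /andP [Hk _]; rewrite -lt0n Hk.
Qed.

Lemma piece_fst (T : finType) n (r0 : 'I_n) (v : T) j m z :
  z \in piece r0 v j m -> z.1 == v.
Proof.
rewrite /piece; case: ifP => _.
  by rewrite mem_cat inE !mem_Bk => /or3P [/andP [] | /eqP -> | /andP []].
case: ifP => _; first by rewrite inE => /eqP ->.
by rewrite inE mem_Bk => /orP [/eqP -> | /andP []].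
Qed.

Lemma Vtail (T : finType) n (r0 : 'I_n) (v : T) M k : forall a, 0 < a -> a + k.+1 = M ->
  flatten [seq piece r0 v j M | j <- iota a k.+1] =
  flatten (nseq k ((v, r0) :: Bk n v)) ++ [:: (v, r0)].
Proof.
elim: k => [|k IH] a Ha HM /=.
  by rewrite /piece -(prednK Ha) /= -HM addn1 (prednK Ha) eqxx.
rewrite -catA -(IH a.+1) //; last by rewrite -HM addSnnS.
rewrite /piece -(prednK Ha) /=.
have -> : (a.-1.+2 == M) = false.
  by apply/negbTE; rewrite -HM (prednK Ha) neq_ltn addnS ltnS -addn1 leq_add2l.
by [].
Qed.

Lemma Vform (T : finType) n (r0 : 'I_n) (v : T) m : 0 < m ->
  flatten [seq piece r0 v j m | j <- iota 0 m] =
  (Bk n v ++ (v, r0) :: Bk n v) ++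
  (if m == 1 then [::] else flatten (nseq (m - 2) ((v, r0) :: Bk n v)) ++ [:: (v, r0)]).
Proof.
case: m => [|m] // _.
rewrite /= {1}/piece /=; congr (_ ++ _).
case: m => [|m] //=.
rewrite subn2 /= -(Vtail r0 v (M := m.+2) (k := m) (a := 1)) //.
Qed.

Definition Wd (T : finType) n (r0 : 'I_n) (w : seq T) :=
  bld (fun x j => piece r0 x j (count_mem x w)) [::] w.

Definition Vc (T : finType) n (r0 : 'I_n) (w : seq T) v :=
  flatten [seq piece r0 v j (count_mem v w) | j <- iota 0 (count_mem v w)].

Lemma W_filter_v (T : finType) n (r0 : 'I_n) (w : seq T) (P : pred (T * 'I_n)) v :
  (forall z, P z -> z.1 == v) -> filter P (Wd r0 w) = filter P (Vc r0 w v).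
Proof.
move=> HP; rewrite /Wd (bld_filter (v := v)) //.
move=> x j Hxv; apply: filter_nil_all => z /piece_fst Hz.
apply/negP => /HP Hv; move: Hxv; by rewrite -(eqP Hz) (eqP Hv) eqxx.
Qed.

Lemma alt_sym (A : eqType) (w : seq A) x y : alternate w x y = alternate w y x.
Proof. by rewrite /alternate (eq_filter (a2 := fun z => (z == y) || (z == x))) // => z; rewrite orbC. Qed.

Lemma Bk_nil (T : finType) n (r0 : 'I_n) (v : T) (P : pred (T * 'I_n)) :
  (forall z, P z -> val z.2 = 0) -> filter P (Bk n v) = [::].
Proof.
move=> HP; apply: filter_nil_all => z; rewrite mem_Bk => /andP [_ Hz].
by apply/negP => /HP Hz'; rewrite Hz' in Hz.
Qed.

Lemma Bk_one (T : finType) n (v : T) (P : pred (T * 'I_n)) x :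
  x \in Bk n v -> (forall z, z \in Bk n v -> P z = (z == x)) ->
  filter P (Bk n v) = [:: x].
Proof.
move=> Hx HP; rewrite (eq_in_filter (a2 := pred1 x)) //.
exact: filter_pred1_uniq (Bk_uniq n v) Hx.
Qed.

Lemma W_mem (T : finType) n (r0 : 'I_n) (w : seq T) : val r0 = 0 ->
  (forall v, v \in w) -> forall z, z \in Wd r0 w.
Proof.
move=> Hr0 Hw [v i].
have : (v, i) \in filter (pred1 (v, i)) (Wd r0 w).
  rewrite (@W_filter_v _ _ r0 w _ v); last by move=> z /= /eqP ->.
  rewrite mem_filter /= eqxx /= /Vc Vform; last by rewrite -has_count has_pred1.
  rewrite !mem_cat inE !mem_Bk /= eqxx /=.
  case: (eqVneq (val i) 0) => [Hi|Hi] /=; last by [].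
  by rewrite xpair_eqE eqxx /= -(inj_eq val_inj) Hi Hr0 eqxx.
by rewrite mem_filter => /andP [].
Qed.

Lemma sorted_neq_map (A B : eqType) (g : A -> B) (s : seq A) : injective g ->
  sorted (fun a b => a != b) (map g s) = sorted (fun a b => a != b) s.
Proof.
move=> Hg; rewrite sorted_map; case: s => [|a s] //=.
by apply: eq_path => x y /=; rewrite (inj_eq Hg).
Qed.

Lemma caseA (T : finType) n (r0 : 'I_n) (w : seq T) v u : val r0 = 0 ->
  alternate (Wd r0 w) (v, r0) (u, r0) = alternate w v u.
Proof.
move=> Hr0; rewrite /alternate /Wd.
set P := fun z => (z == (v, r0)) || _.
rewrite (@bld_filter_map _ _ _ P (fun x => if (x == v) || (x == u) then [:: (x, r0)] else [::])).
  have -> : forall s, flatten [seq (if (x == v) || (x == u) then [:: (x, r0)] else [::]) | x <- s]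
     = map (fun a => (a, r0)) (filter (fun z => (z == v) || (z == u)) s).
    by elim=> [|x s IH] //=; case: ifP => _ //=; rewrite IH.
  by rewrite sorted_neq_map // => a b [].
have HB : forall x, filter P (Bk n x) = [::].
  move=> x; apply: Bk_nil => // z; rewrite /P => /orP [] /eqP -> //.
have HR : forall x, filter P [:: (x, r0)] = if (x == v) || (x == u) then [:: (x, r0)] else [::].
  by move=> x; rewrite /= /P !xpair_eqE eqxx !andbT.
move=> x j; rewrite /piece; case: ifP => _.
  by rewrite filter_cat HB -cat1s filter_cat HR HB cats0.
case: ifP => _; first by rewrite HR.
by rewrite -cat1s filter_cat HR HB cats0.
Qed.

Lemma alt_nseq (A : eqType) (a b : A) k : a != b ->
  sorted (fun a b => a != b) (flatten (nseq k.+1 [:: a; b])).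
Proof. by move=> Hab /=; rewrite Hab alt2. Qed.

Lemma caseB (T : finType) n (r0 : 'I_n) (w : seq T) v i j : val r0 = 0 ->
  v \in w -> val i != 0 -> i != j ->
  alternate (Wd r0 w) (v, i) (v, j).
Proof.
move=> Hr0 Hv Hi Hij; rewrite /alternate.
set P := fun z => (z == (v, i)) || _.
rewrite (@W_filter_v _ _ r0 w P v); last by move=> z /orP [] /eqP ->.
have Hm : 0 < count_mem v w by rewrite -has_count has_pred1.
rewrite /Vc Vform //.
set m := count_mem v w.
have Hxin : (v, i) \in Bk n v by rewrite mem_Bk eqxx.
case: (eqVneq (val j) 0) => [Hj|Hj].
  have Hj0 : j = r0 by apply: val_inj; rewrite Hj Hr0.
  subst j.
  have HB : filter P (Bk n v) = [:: (v, i)].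
    apply: Bk_one => // z; rewrite mem_Bk => /andP [_ Hz].
    rewrite /P; case: (eqVneq z (v, r0)) => [Hz'|]; last by rewrite orbF.
    by rewrite Hz' Hr0 eqxx in Hz.
  have HR : filter P [:: (v, r0)] = [:: (v, r0)] by rewrite /= /P eqxx orbT.
 
  rewrite !filter_cat -cat1s filter_cat HB HR /=.
  have Hne : (v, i) != (v, r0).
    by rewrite xpair_eqE eqxx /= -(inj_eq val_inj) Hr0.
  case: ifP => _; first by rewrite /= Hne eq_sym Hne.
 
  rewrite filter_cat filter_nseq -cat1s filter_cat HR HB /=.
  have Hne' : (v, r0) != (v, i) by rewrite eq_sym.
  by rewrite Hne Hne' /= cat_path alt2 // last_alt2 /= Hne.
have HR : filter P [:: (v, r0)] = [::].
  rewrite /= /P !xpair_eqE eqxx /= -!(inj_eq val_inj) Hr0 ![0 == _]eq_sym.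
  by rewrite (negbTE Hi) (negbTE Hj).
have Hyin : (v, j) \in Bk n v by rewrite mem_Bk eqxx.
have [a [b [Hab HB]]] : exists a b, a != b /\ filter P (Bk n v) = [:: a; b].
  have Hu : uniq (filter P (Bk n v)) by rewrite filter_uniq // Bk_uniq.
  have Hp : perm_eq (filter P (Bk n v)) [:: (v, i); (v, j)].
    apply: uniq_perm => //.
      by rewrite /= inE andbT xpair_eqE eqxx.
    move=> z; rewrite mem_filter !inE /P.
    by case: (eqVneq z (v, i)) => [->|_] //=; case: (eqVneq z (v, j)) => [->|_].
  move: (perm_size Hp) Hu; case: (filter P (Bk n v)) => [|a [|b [|c s]]] //= _.
  by rewrite inE andbT => Hab; exists a, b.
rewrite !filter_cat -cat1s filter_cat HB HR /=.
case: ifP => _.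
  by rewrite /= Hab (eq_sym b a) Hab.
rewrite filter_cat filter_nseq -cat1s filter_cat HR HB /= cats0.
rewrite Hab (eq_sym b a) Hab /=.
exact: alt2.
Qed.

Lemma caseC (T : finType) n (r0 : 'I_n) (w : seq T) v i y : val r0 = 0 ->
  v \in w -> val i != 0 -> y.1 != v ->
  alternate (Wd r0 w) (v, i) y = false.
Proof.
move=> Hr0 Hv Hi Hy; rewrite /alternate /Wd.
set P := fun z => (z == (v, i)) || _.
have [B [C ->]] := @bld_first _ _ (fun x j => piece r0 x j (count_mem x w)) P v w [::] Hv erefl.
have Hxin : (v, i) \in Bk n v by rewrite mem_Bk eqxx.
have HB : filter P (Bk n v) = [:: (v, i)].
  apply: Bk_one => // z; rewrite mem_Bk => /andP [/eqP Hz _].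
  rewrite /P; case: (eqVneq z y) => [Hz'|]; last by rewrite orbF.
  by move: Hy; rewrite -Hz' Hz eqxx.
have HR : filter P [:: (v, r0)] = [::].
  rewrite /= /P; case: (eqVneq (v, r0) y) => [Hz'|_]; first by move: Hy; rewrite -Hz' eqxx.
  by rewrite orbF xpair_eqE eqxx /= -(inj_eq val_inj) Hr0 eq_sym (negbTE Hi).
rewrite /piece /= filter_cat -cat1s filter_cat HB HR /=.
exact: sorted_dup.
Qed.

Lemma size_Vc (T : finType) n (r0 : 'I_n) (w : seq T) v : 0 < n -> v \in w ->
  size (Vc r0 w v) = n * count_mem v w + (n - 1) * (count_mem v w == 1).
Proof.
move=> Hn Hv; have Hm : 0 < count_mem v w by rewrite -has_count has_pred1.
rewrite /Vc Vform // !size_cat /= size_Bk //.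
case: (count_mem v w) Hm => [|[|m]] //= _.
  rewrite -!subn1; lia.
rewrite size_cat size_nseqf /= size_Bk // subn2 /= (prednK Hn) -!subn1.
nia.
Qed.

Lemma min_ex (P : nat -> Prop) k : P k -> exists m, P m /\ forall k', P k' -> m <= k'.
Proof.
elim: k {-2}k (leqnn k) => [|N IH] k Hk Pk.
  move: Hk; rewrite leqn0 => /eqP Hk; subst k.
  by exists 0; split => // k' _.
case: (classic (exists k', k' < k /\ P k')) => [[k' [Hlt Pk']]|Hno].
  apply: (IH k') => //; rewrite -ltnS; exact: leq_trans Hlt Hk.
exists k; split => // k' Pk'; rewrite leqNgt; apply/negP => Hlt.
by apply: Hno; exists k'.
Qed.

Lemma clique_once (T : finType) (e : rel T) (w : seq T) :
  represents e w -> is_clique e [set v | count_mem v w == 1].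
Proof.
move=> Hrep; apply/forall_inP => x; rewrite inE => /eqP Hx.
apply/forall_inP => y; rewrite inE => /eqP Hy; apply/implyP => Hxy.
apply/(proj2 Hrep x y Hxy); rewrite /alternate.
set P := fun z => (z == x) || (z == y).
have Hc : count P w = 2.
  have := count_predUI (pred1 x) (pred1 y) w.
  have -> : count (predI (pred1 x) (pred1 y)) w = 0.
    rewrite (eq_count (a2 := pred0)) ?count_pred0 // => z /=.
    by case: (eqVneq z x) => [->|] //=; rewrite (negbTE Hxy).
  by rewrite addn0 /= Hx Hy.
have Hle : forall a, count_mem a (filter P w) <= count_mem a w.
  by move=> a; rewrite count_filter; apply: sub_count => z /andP [].
have Hmem : forall z, z \in filter P w -> P z by move=> z; rewrite mem_filter => /andP [].
rewrite -size_filter in Hc.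
move: Hle Hmem Hc; case: (filter P w) => [|a [|b [|c s]]] //= Hle Hmem _.
rewrite andbT; apply/negP => /eqP Hab; subst b.
have := Hle a; rewrite /= eqxx /=.
have := Hmem a; rewrite inE eqxx => /(_ isT) /orP [] /eqP ->.
  by rewrite Hx.
by rewrite Hy.
Qed.

Theorem mainTheorem10 (T : finType) (e : rel T) (n : nat) (lG : nat) :
  simple_graph e -> 2 <= n ->
  word_representable e ->
  is_min_rep_length e lG ->
  exists lH : nat,
    is_min_rep_length (rooted_prod_K e n) lH /\
    lH <= n * lG + (n - 1) * clique_number e.
Proof.
move=> _ Hn _ [[w [Hrep Hsz]] _].
have Hn0 : 0 < n by apply: leq_trans Hn.
pose r0 : 'I_n := Ordinal Hn0.
have Hr0 : val r0 = 0 by [].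
pose W := Wd r0 w.
have Hall := proj1 Hrep.
have HW : represents (rooted_prod_K e n) W.
  split; first exact: W_mem Hr0 Hall.
  move=> [v i] [u j] Hxy; rewrite /rooted_prod_K /=.
  case: (eqVneq (val i) 0) => Hi; case: (eqVneq (val j) 0) => Hj /=.
  - have Hi0 : i = r0 by apply: val_inj.
    have Hj0 : j = r0 by apply: val_inj.
    subst i j.
    have Hvu : v != u by apply: contraNneq Hxy => ->.
    by rewrite caseA //; apply: (proj2 Hrep).
  - case: (eqVneq v u) => [Hvu|Hvu] /=.
      subst u; have Hij : j != i by apply: contraNneq Hxy => ->.
      by rewrite (eq_sym i) Hij alt_sym caseB.
    by rewrite alt_sym caseC.
  - case: (eqVneq v u) => [Hvu|Hvu] /=.
      subst u; have Hij : i != j by apply: contraNneq Hxy => ->.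
      by rewrite Hij caseB.
    by rewrite caseC // eq_sym.
  - case: (eqVneq v u) => [Hvu|Hvu] /=.
      subst u; have Hij : i != j by apply: contraNneq Hxy => ->.
      by rewrite Hij caseB.
    by rewrite caseC // eq_sym.
have [m [[w' [Hw' Hsw']] Hmin]] := @min_ex (fun k => exists w', represents (rooted_prod_K e n) w' /\ size w' = k) (size W) (ex_intro _ W (conj HW erefl)).
exists m; split.
  split; first by exists w'.
  by move=> w'' Hw''; apply: Hmin; exists w''.
apply: leq_trans (Hmin (size W) (ex_intro _ W (conj HW erefl))) _.
have Hsize : size W = \sum_(v : T) (n * count_mem v w + (n - 1) * (count_mem v w == 1)).
  rewrite -(size_map fst) -sum_count_size; apply: eq_bigr => v _.
  rewrite count_map -size_filter (@W_filter_v _ _ r0 w _ v) //.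
  rewrite -(@size_Vc _ _ r0 w v Hn0 (Hall v)); congr size.
  apply/all_filterP/allP => z /flatten_mapP [j _ Hz]; exact: piece_fst Hz.
rewrite Hsize big_split /= -!big_distrr /= sum_count_size Hsz.
rewrite leq_add2l leq_mul2l; apply/orP; right.
have -> : \sum_(v : T) (count_mem v w == 1 : nat) = #|[set v | count_mem v w == 1]|.
  rewrite -sum1_card [RHS]big_mkcond /=; apply: eq_bigr => v _.
  by rewrite inE; case: (_ == 1).
rewrite /clique_number.
exact: (@leq_bigmax_cond _ (fun S => is_clique e S) (fun S => #|S|) _ (clique_once Hrep)).
Qed.
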